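(* Let $\mathcal{X}=\mathbb{R}^3$ with the Euclidean topology, partially ordered by the cone $\mathbb{R}^3_+$. There exist a set $\mathcal{A}\subset\mathbb{R}^3$, a linear subspace $\mathcal{M}\subset\mathbb{R}^3$ and a linear functional $\pi:\mathcal{M}\to\mathbb{R}$ such that $(\mathcal{A},\mathcal{M},\pi)$ is admissible (in the sense defined in the context) and the optimal set mapping $E:\mathbb{R}^3\rightrightarrows\mathcal{M}$ admits no continuous selection; more precisely, there is a point $x_0\in\mathbb{R}^3$ such that no map $s:\mathbb{R}^3\to\mathcal{M}$ with $s(x)\in E(x)$ for all $x\in\mathbb{R}^3$ is continuous at $x_0$.
   Context: Given a set $\mathcal{A}\subset\mathbb{R}^3$ (acceptable positions), a linear subspace $\mathcal{M}\subset\mathbb{R}^3$ (payoffs, with the relative topology) and a linear functional $\pi:\mathcal{M}\to\mathbb{R}$ (price), define the risk measure $\rho:\mathbb{R}^3\to[-\infty,+\infty]$ by $\rho(x)=\inf\{\pi(z)\,;\ z\in\mathcal{M},\ z+x\in\mathcal{A}\}$ and the optimal set mapping $E:\mathbb{R}^3\rightrightarrows\mathcal{M}$ by $E(x)=\{z\in\mathcal{M}\,;\ z+x\in\mathcal{A},\ \pi(z)=\rho(x)\}$. The triple $(\mathcal{A},\mathcal{M},\pi)$ is called admissible if: (R1) $\mathcal{A}$ is closed, convex, contains $0$, and is monotone: $x\in\mathcal{A}$ and $y-x\in\mathbb{R}^3_+$ imply $y\in\mathcal{A}$; (R2) there is no arbitrage: every $z\in\mathcal{M}\cap\mathbb{R}^3_+$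 with $z\neq0$ satisfies $\pi(z)>0$; (R3) $\rho$ is finite-valued and continuous on $\mathbb{R}^3$. *)

(* Defs.v *)
(* R^3 is modelled as the Coquelicot product
   space (R * R * R), whose uniform structure is the product (= Euclidean)
   topology, and whose module operations are componentwise. *)
From Stdlib Require Import Reals.
From Coquelicot Require Import Coquelicot.
Open Scope R_scope.

Definition R3 : Type := (R * R * R)%type.

Definition c1 (x : R3) : R := fst (fst x).
Definition c2 (x : R3) : R := snd (fst x).
Definition c3 (x : R3) : R := snd x.

Definition nonneg3 (x : R3) : Prop := 0 <= c1 x /\ 0 <= c2 x /\ 0 <= c3 x.

Definition convex3 (A : R3 -> Prop) : Prop :=
  forall x y (t : R), A x -> A y -> 0 <= t <= 1 ->
    A (plus (scal t x) (scal (1 - t) y)).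

Definition acc_set (A : R3 -> Prop) : Prop :=
  closed A /\ convex3 A /\ A zero /\
  (forall x y : R3, A x -> nonneg3 (minus y x) -> A y).

Definition lin_subspace (M : R3 -> Prop) : Prop :=
  M zero /\ (forall x y, M x -> M y -> M (plus x y)) /\
  (forall (a : R) x, M x -> M (scal a x)).

(* pi is a linear functional on M (its values outside M are irrelevant) *)
Definition lin_functional (M : R3 -> Prop) (pi : R3 -> R) : Prop :=
  (forall x y, M x -> M y -> pi (plus x y) = pi x + pi y) /\
  (forall (a : R) x, M x -> pi (scal a x) = a * pi x).

Definition rho (A M : R3 -> Prop) (pi : R3 -> R) (x : R3) : Rbar :=
  Glb_Rbar (fun r => exists z, M z /\ A (plus z x) /\ r = pi z).

Definition Eopt (A M : R3 -> Prop) (pi : R3 -> R) (x z : R3) : Prop :=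
  M z /\ A (plus z x) /\ Finite (pi z) = rho A M pi x.

Definition no_arbitrage (M : R3 -> Prop) (pi : R3 -> R) : Prop :=
  forall z, M z -> nonneg3 z -> z <> zero -> pi z > 0.

Definition rho_finite_continuous (A M : R3 -> Prop) (pi : R3 -> R) : Prop :=
  (forall x, is_finite (rho A M pi x)) /\
  (forall x, continuous (fun y => real (rho A M pi y)) x).

Definition admissible (A M : R3 -> Prop) (pi : R3 -> R) : Prop :=
  acc_set A /\ no_arbitrage M pi /\ rho_finite_continuous A M pi.

(* Main.v *)
From Pilot Require Import Defs.
From Stdlib Require Import Reals Lra Psatz.
From Coquelicot Require Import Coquelicot.
Import Pilot.Defs.
Open Scope R_scope.

Definition N (a b : R) : R := sqrt (a * a + b * b).

Lemma N_ge0 a b : 0 <= N a b.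
Proof. apply sqrt_pos. Qed.

Lemma N_sq a b : N a b * N a b = a * a + b * b.
Proof. unfold N. apply sqrt_sqrt. nra. Qed.

Lemma sqrt_le_sq x y : 0 <= y -> 0 <= x -> x <= y * y -> sqrt x <= y.
Proof.
  intros Hy Hx H. rewrite <- (sqrt_square y) by lra. apply sqrt_le_1_alt. lra.
Qed.

Lemma le_of_sq x y : 0 <= x -> 0 <= y -> x * x <= y * y -> x <= y.
Proof. intros; nra. Qed.

Lemma N_absa a b : Rabs a <= N a b.
Proof.
  apply le_of_sq. apply Rabs_pos. apply N_ge0. rewrite N_sq.
  rewrite <- Rabs_mult, Rabs_right by nra. nra.
Qed.

Lemma N_mink a b c d : N (a + c) (b + d) <= N a b + N c d.
Proof.
  apply le_of_sq. apply N_ge0. pose proof (N_ge0 a b); pose proof (N_ge0 c d); lra.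
  rewrite N_sq.
  pose proof (N_sq a b) as E1. pose proof (N_sq c d) as E2.
  pose proof (N_ge0 a b); pose proof (N_ge0 c d).
  assert (a * c + b * d <= N a b * N c d).
  { destruct (Rle_dec (a*c+b*d) 0). pose proof (Rmult_le_pos _ _ H H0). lra.
    apply le_of_sq. lra. nra.
    replace (N a b * N c d * (N a b * N c d)) with ((N a b * N a b) * (N c d * N c d)) by ring.
    rewrite E1, E2. pose proof (Rle_0_sqr (a*d - b*c)) as Hs; unfold Rsqr in Hs. nra. }
  nra.
Qed.

Lemma N_hom k a b : 0 <= k -> N (k * a) (k * b) = k * N a b.
Proof.
  intros Hk. unfold N.
  replace (k * a * (k * a) + k * b * (k * b)) with ((k*k) * (a*a+b*b)) by ring.
  rewrite sqrt_mult by nra. rewrite sqrt_square by lra. reflexivity.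
Qed.

Lemma N_mono a b b' : 0 <= b -> b <= b' -> N a b <= N a b'.
Proof. intros. unfold N. apply sqrt_le_1_alt. nra. Qed.

Lemma N_le_abs a b : N a b <= Rabs a + Rabs b.
Proof.
  apply le_of_sq. apply N_ge0. pose proof (Rabs_pos a); pose proof (Rabs_pos b); lra.
  rewrite N_sq. pose proof (Rabs_pos a); pose proof (Rabs_pos b).
  assert (Rabs a * Rabs a = a * a) by (rewrite <- Rabs_mult; apply Rabs_right; nra).
  assert (Rabs b * Rabs b = b * b) by (rewrite <- Rabs_mult; apply Rabs_right; nra).
  nra.
Qed.

Lemma N_lip a b a' b' : N a' b' <= N a b + Rabs (a' - a) + Rabs (b' - b).
Proof.
  replace a' with (a + (a' - a)) at 1 by ring.
  replace b' with (b + (b' - b)) at 1 by ring.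
  pose proof (N_mink a b (a'-a) (b'-b)). pose proof (N_le_abs (a'-a) (b'-b)). lra.
Qed.

Lemma N_conv l a b a' b' : 0 <= l <= 1 ->
  N (l * a + (1 - l) * a') (l * b + (1 - l) * b') <= l * N a b + (1 - l) * N a' b'.
Proof.
  intros Hl. rewrite <- (N_hom l a b), <- (N_hom (1-l) a' b') by lra.
  apply N_mink.
Qed.

Lemma N_strict a b t : t <> 0 -> N a t + Rabs b <= N (a + b) t -> b = 0.
Proof.
  intros Ht H.
  pose proof (N_sq a t) as E1. pose proof (N_sq (a+b) t) as E2.
  pose proof (N_ge0 a t). pose proof (N_ge0 (a+b) t). pose proof (Rabs_pos b).
  assert (Hsq : (N a t + Rabs b) * (N a t + Rabs b) <= N (a+b) t * N (a+b) t) by nra.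
  assert (Rabs b * Rabs b = b * b) by (rewrite <- Rabs_mult; apply Rabs_right; nra).
  assert (N a t * Rabs b <= a * b) by nra.
  assert (a * b <= Rabs a * Rabs b) by (rewrite <- Rabs_mult; apply Rle_abs).
  assert (Rabs a * Rabs a = a * a) by (rewrite <- Rabs_mult; apply Rabs_right; nra).
  assert (t * t > 0) by (destruct (Rlt_dec t 0); nra).
  assert (Rabs a < N a t).
  { destruct (Rle_lt_dec (N a t) (Rabs a)); [|lra]. pose proof (Rabs_pos a). nra. }
  destruct (Req_dec b 0) as [|Hb]; [assumption|].
  assert (Rabs b > 0) by (apply Rabs_pos_lt; auto).
  pose proof (Rabs_pos a). nra.
Qed.

Definition pos (t : R) : R := (t + Rabs t) / 2.
Definition neg (t : R) : R := (Rabs t - t) / 2.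

Lemma pos_ge0 t : 0 <= pos t.
Proof. unfold pos, Rabs; destruct (Rcase_abs t); lra. Qed.
Lemma neg_ge0 t : 0 <= neg t.
Proof. unfold neg, Rabs; destruct (Rcase_abs t); lra. Qed.
Lemma pos_neg t : pos t + neg t = Rabs t.
Proof. unfold pos, neg; lra. Qed.
Lemma pos_conv l t t' : 0 <= l <= 1 ->
  pos (l * t + (1 - l) * t') <= l * pos t + (1 - l) * pos t'.
Proof.
  intros Hl. unfold pos.
  pose proof (Rabs_triang (l * t) ((1-l) * t')).
  rewrite !Rabs_mult, (Rabs_right l), (Rabs_right (1-l)) in H by lra. lra.
Qed.
Lemma neg_conv l t t' : 0 <= l <= 1 ->
  neg (l * t + (1 - l) * t') <= l * neg t + (1 - l) * neg t'.
Proof.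
  intros Hl. unfold neg.
  pose proof (Rabs_triang (l * t) ((1-l) * t')).
  rewrite !Rabs_mult, (Rabs_right l), (Rabs_right (1-l)) in H by lra. lra.
Qed.
Lemma posneg_mono t t' : t <= t' -> Rabs (pos t' - pos t) + Rabs (neg t' - neg t) = t' - t.
Proof.
  intros H. unfold pos, neg.
  destruct (Rcase_abs t), (Rcase_abs t');
  repeat (rewrite (Rabs_left t) by lra || rewrite (Rabs_right t) by lra);
  repeat (rewrite (Rabs_left t') by lra || rewrite (Rabs_right t') by lra);
  unfold Rabs; repeat destruct Rcase_abs; lra.
Qed.

Definition L (p t : R) : R := N (1 + p) (pos t) + N (1 - p) (neg t).

Lemma L_lb p t : sqrt (4 + t * t) <= L p t.
Proof.
  unfold L.
  assert (E : sqrt (4 + t * t) = N ((1 + p) + (1 - p)) (pos t + neg t)).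
  { unfold N. rewrite pos_neg. f_equal.
    rewrite <- Rabs_mult, Rabs_right by nra. ring. }
  rewrite E. apply N_mink.
Qed.

Lemma N_0 b : 0 <= b -> N 0 b = b.
Proof. intros. unfold N. replace (0*0 + b*b) with (b*b) by ring. apply sqrt_square; lra. Qed.

Definition popt (t : R) : R := if Rle_dec 0 t then 1 else -1.

Lemma L_opt t : L (popt t) t = sqrt (4 + t * t).
Proof.
  unfold L, popt. destruct (Rle_dec 0 t).
  - unfold pos, neg. rewrite Rabs_right by lra.
    replace ((t + t)/2) with t by field. replace ((t - t)/2) with 0 by field.
    replace (1 - 1) with 0 by ring. rewrite N_0 by lra. unfold N. rewrite Rplus_0_r.
    f_equal; try ring.
  - unfold pos, neg. rewrite Rabs_left by lra.
    replace ((t + - t)/2) with 0 by field. replace ((- t - t)/2) with (-t) by field.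
    replace (1 + -1) with 0 by ring. rewrite N_0 by lra. unfold N. rewrite Rplus_0_l.
    f_equal; try ring.
Qed.

Lemma L_forced_pos p t : 0 < t -> L p t <= sqrt (4 + t * t) -> p = 1.
Proof.
  intros Ht H. unfold L, pos, neg in H. rewrite Rabs_right in H by lra.
  replace ((t + t)/2) with t in H by field. replace ((t - t)/2) with 0 in H by field.
  assert (E : N (1 - p) 0 = Rabs (1 - p)).
  { unfold N. replace ((1-p)*(1-p) + 0*0) with (Rsqr (1-p)) by (unfold Rsqr; ring).
    apply sqrt_Rsqr_abs. }
  rewrite E in H.
  assert (E2 : sqrt (4 + t * t) = N (1 + p + (1 - p)) t).
  { unfold N. f_equal. ring. }
  rewrite E2 in H. apply N_strict in H; lra.
Qed.

Lemma L_forced_neg p t : t < 0 -> L p t <= sqrt (4 + t * t) -> p = -1.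
Proof.
  intros Ht H. unfold L, pos, neg in H. rewrite Rabs_left in H by lra.
  replace ((t + - t)/2) with 0 in H by field. replace ((- t - t)/2) with (-t) in H by field.
  assert (E : N (1 + p) 0 = Rabs (1 + p)).
  { unfold N. replace ((1+p)*(1+p) + 0*0) with (Rsqr (1+p)) by (unfold Rsqr; ring).
    apply sqrt_Rsqr_abs. }
  rewrite E in H.
  assert (E2 : sqrt (4 + t * t) = N (1 - p + (1 + p)) (-t)).
  { unfold N. f_equal. ring. }
  rewrite E2 in H. rewrite Rplus_comm in H. apply N_strict in H; lra.
Qed.

Section Cont.
Context {T : UniformSpace}.
Lemma cR_plus (f g : T -> R) x : continuous f x -> continuous g x -> continuous (fun y => f y + g y) x.
Proof. intros; apply (continuous_plus f g x); auto. Qed.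
Lemma cR_mult (f g : T -> R) x : continuous f x -> continuous g x -> continuous (fun y => f y * g y) x.
Proof. intros; apply (continuous_mult f g x); auto. Qed.
Lemma cR_opp (f : T -> R) x : continuous f x -> continuous (fun y => - f y) x.
Proof. intros; apply (continuous_opp f x); auto. Qed.
Lemma cR_minus (f g : T -> R) x : continuous f x -> continuous g x -> continuous (fun y => f y - g y) x.
Proof. intros; apply cR_plus; auto; apply cR_opp; auto. Qed.
Lemma cR_const (c : R) x : continuous (fun _ : T => c) x.
Proof. apply continuous_const. Qed.
Lemma cR_div2 (f : T -> R) x : continuous f x -> continuous (fun y => f y / 2) x.
Proof. intros; apply cR_mult; auto; apply cR_const. Qed.
Lemma cR_sqrt (f : T -> R) x : continuous f x -> continuous (fun y => sqrt (f y)) x.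
Proof. intros; apply (continuous_comp f sqrt x); auto; apply continuous_sqrt. Qed.
Lemma cR_abs (f : T -> R) x : continuous f x -> continuous (fun y => Rabs (f y)) x.
Proof. intros; apply (continuous_comp f Rabs x); auto; apply continuous_Rabs. Qed.
Lemma cR_N (f g : T -> R) x : continuous f x -> continuous g x -> continuous (fun y => N (f y) (g y)) x.
Proof. intros; unfold N; apply cR_sqrt; apply cR_plus; apply cR_mult; auto. Qed.
Lemma cR_pos (f : T -> R) x : continuous f x -> continuous (fun y => pos (f y)) x.
Proof. intros; unfold pos; apply cR_div2; apply cR_plus; auto; apply cR_abs; auto. Qed.
Lemma cR_neg (f : T -> R) x : continuous f x -> continuous (fun y => neg (f y)) x.
Proof. intros; unfold neg; apply cR_div2; apply cR_minus; auto; apply cR_abs; auto. Qed.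
End Cont.

Lemma cont_c1 (x : R3) : continuous c1 x.
Proof.
  destruct x as [[a b] c]. unfold c1.
  apply (continuous_comp fst fst ((a,b),c)). apply continuous_fst. apply continuous_fst.
Qed.
Lemma cont_c2 (x : R3) : continuous c2 x.
Proof.
  destruct x as [[a b] c]. unfold c2.
  apply (continuous_comp fst snd ((a,b),c)). apply continuous_fst. apply continuous_snd.
Qed.
Lemma cont_c3 (x : R3) : continuous c3 x.
Proof. destruct x as [[a b] c]. unfold c3. apply continuous_snd. Qed.

Definition Aset (y : R3) : Prop := L (c1 y - c2 y) (c3 y) <= 2 + c3 y + 2 * (c1 y + c2 y).
Definition Mset (z : R3) : Prop := c3 z = 0.
Definition piF (z : R3) : R := c1 z + c2 z.
Definition vfun (x : R3) : R := (sqrt (4 + c3 x * c3 x) - 2 - c3 x) / 2 - c1 x - c2 x.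

Lemma c1_plus (x y : R3) : c1 (plus x y) = c1 x + c1 y. Proof. reflexivity. Qed.
Lemma c2_plus (x y : R3) : c2 (plus x y) = c2 x + c2 y. Proof. reflexivity. Qed.
Lemma c3_plus (x y : R3) : c3 (plus x y) = c3 x + c3 y. Proof. reflexivity. Qed.
Lemma c1_scal (a : R) (x : R3) : c1 (scal a x) = a * c1 x. Proof. reflexivity. Qed.
Lemma c2_scal (a : R) (x : R3) : c2 (scal a x) = a * c2 x. Proof. reflexivity. Qed.
Lemma c3_scal (a : R) (x : R3) : c3 (scal a x) = a * c3 x. Proof. reflexivity. Qed.
Lemma c1_zero : c1 (zero : R3) = 0. Proof. reflexivity. Qed.
Lemma c2_zero : c2 (zero : R3) = 0. Proof. reflexivity. Qed.
Lemma c3_zero : c3 (zero : R3) = 0. Proof. reflexivity. Qed.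
Lemma c1_minus (x y : R3) : c1 (minus x y) = c1 x - c1 y. Proof. reflexivity. Qed.
Lemma c2_minus (x y : R3) : c2 (minus x y) = c2 x - c2 y. Proof. reflexivity. Qed.
Lemma c3_minus (x y : R3) : c3 (minus x y) = c3 x - c3 y. Proof. reflexivity. Qed.

Lemma rho_eq x : rho Aset Mset piF x = Finite (vfun x).
Proof.
  unfold rho. apply is_glb_Rbar_unique. split.
  - intros r [z [Hz [HA Hr]]]. simpl. subst r.
    unfold Aset in HA. rewrite c1_plus, c2_plus, c3_plus in HA.
    unfold Mset in Hz. rewrite Hz, Rplus_0_l in HA.
    pose proof (L_lb (c1 z + c1 x - (c2 z + c2 x)) (c3 x)).
    unfold vfun, piF. lra.
  - intros b Hb. apply Hb.
    set (p := popt (c3 x)). set (v := vfun x).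
    set (z := (((v + p - c1 x + c2 x)/2, (v - p + c1 x - c2 x)/2), 0) : R3).
    assert (E1 : c1 z = (v + p - c1 x + c2 x)/2) by reflexivity.
    assert (E2 : c2 z = (v - p + c1 x - c2 x)/2) by reflexivity.
    assert (E3 : c3 z = 0) by reflexivity.
    exists z. split; [exact E3|]. split; [|unfold piF; rewrite E1, E2; field].
    unfold Aset. rewrite c1_plus, c2_plus, c3_plus, E1, E2, E3, Rplus_0_l.
    replace ((v + p - c1 x + c2 x) / 2 + c1 x - ((v - p + c1 x - c2 x) / 2 + c2 x)) with p by field.
    unfold p. rewrite L_opt. unfold v, vfun. lra.
Qed.

Lemma cont_vfun x : continuous vfun x.
Proof.
  unfold vfun. apply cR_minus; [apply cR_minus|apply cont_c2].
  apply cR_div2. apply cR_minus; [apply cR_minus|apply cont_c3].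
  apply cR_sqrt. apply cR_plus. apply cR_const. apply cR_mult; apply cont_c3.
  apply cR_const. apply cont_c1.
Qed.

Lemma A_closed : closed Aset.
Proof.
  set (G := fun y : R3 => L (c1 y - c2 y) (c3 y) - (2 + c3 y + 2 * (c1 y + c2 y))).
  apply (closed_ext (fun y => G y <= 0)). { intros y; unfold G, Aset; split; lra. }
  apply (closed_comp G (fun u => u <= 0)). 2: apply closed_le.
  intros y0. change (continuous G y0). unfold G, L. apply cR_minus.
  - apply cR_plus; apply cR_N.
    + apply cR_plus. apply cR_const. apply cR_minus; [apply cont_c1|apply cont_c2].
    + apply cR_pos, cont_c3.
    + apply cR_minus. apply cR_const. apply cR_minus; [apply cont_c1|apply cont_c2].
    + apply cR_neg, cont_c3.
  - apply cR_plus. apply cR_plus. apply cR_const. apply cont_c3.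
    apply cR_mult. apply cR_const. apply cR_plus; [apply cont_c1|apply cont_c2].
Qed.

Lemma A_convex : convex3 Aset.
Proof.
  intros x y l Hx Hy Hl. unfold Aset in *.
  rewrite c1_plus, c2_plus, c3_plus, !c1_scal, !c2_scal, !c3_scal.
  unfold L in *.
  set (px := c1 x - c2 x) in *. set (py := c1 y - c2 y) in *.
  replace (l * c1 x + (1 - l) * c1 y - (l * c2 x + (1 - l) * c2 y)) with (l * px + (1-l) * py) by (unfold px, py; ring).
  assert (H1 : N (1 + (l * px + (1 - l) * py)) (pos (l * c3 x + (1 - l) * c3 y))
     <= l * N (1 + px) (pos (c3 x)) + (1 - l) * N (1 + py) (pos (c3 y))).
  { eapply Rle_trans. apply N_mono. apply pos_ge0. apply pos_conv; auto.
    replace (1 + (l * px + (1 - l) * py)) with (l * (1 + px) + (1 - l) * (1 + py)) by ring.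
    apply N_conv; auto. }
  assert (H2 : N (1 - (l * px + (1 - l) * py)) (neg (l * c3 x + (1 - l) * c3 y))
     <= l * N (1 - px) (neg (c3 x)) + (1 - l) * N (1 - py) (neg (c3 y))).
  { eapply Rle_trans. apply N_mono. apply neg_ge0. apply neg_conv; auto.
    replace (1 - (l * px + (1 - l) * py)) with (l * (1 - px) + (1 - l) * (1 - py)) by ring.
    apply N_conv; auto. }
  assert (l * (N (1 + px) (pos (c3 x)) + N (1 - px) (neg (c3 x))) <= l * (2 + c3 x + 2 * (c1 x + c2 x))) by (apply Rmult_le_compat_l; lra).
  assert ((1-l) * (N (1 + py) (pos (c3 y)) + N (1 - py) (neg (c3 y))) <= (1-l) * (2 + c3 y + 2 * (c1 y + c2 y))) by (apply Rmult_le_compat_l; lra).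
  nra.
Qed.

Lemma A_zero : Aset zero.
Proof.
  unfold Aset. rewrite c1_zero, c2_zero, c3_zero.
  unfold L, pos, neg. rewrite Rabs_R0.
  replace ((0+0)/2) with 0 by field. replace ((0-0)/2) with 0 by field.
  replace (1 + (0 - 0)) with 1 by ring. replace (1 - (0 - 0)) with 1 by ring.
  unfold N. replace (1*1+0*0) with 1 by ring. rewrite sqrt_1. lra.
Qed.

Lemma A_mono : forall x y : R3, Aset x -> nonneg3 (minus y x) -> Aset y.
Proof.
  intros x y Hx [H1 [H2 H3]]. rewrite c1_minus in H1. rewrite c2_minus in H2. rewrite c3_minus in H3.
  unfold Aset, L in *.
  pose proof (N_lip (1 + (c1 x - c2 x)) (pos (c3 x)) (1 + (c1 y - c2 y)) (pos (c3 y))) as Ha.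
  pose proof (N_lip (1 - (c1 x - c2 x)) (neg (c3 x)) (1 - (c1 y - c2 y)) (neg (c3 y))) as Hb.
  pose proof (posneg_mono (c3 x) (c3 y) ltac:(lra)) as Hc.
  replace (1 + (c1 y - c2 y) - (1 + (c1 x - c2 x))) with ((c1 y - c1 x) + - (c2 y - c2 x)) in Ha by ring.
  replace (1 - (c1 y - c2 y) - (1 - (c1 x - c2 x))) with (- ((c1 y - c1 x) + - (c2 y - c2 x))) in Hb by ring.
  rewrite Rabs_Ropp in Hb.
  pose proof (Rabs_triang (c1 y - c1 x) (- (c2 y - c2 x))) as Hd.
  rewrite Rabs_Ropp, (Rabs_right (c1 y - c1 x)), (Rabs_right (c2 y - c2 x)) in Hd by lra.
  lra.
Qed.

Lemma forced x z : Eopt Aset Mset piF x z ->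
  L (c1 z + c1 x - (c2 z + c2 x)) (c3 x) <= sqrt (4 + c3 x * c3 x).
Proof.
  intros [Hz [HA Hp]]. rewrite rho_eq in Hp. injection Hp as Hp.
  unfold Aset in HA. rewrite c1_plus, c2_plus, c3_plus in HA.
  unfold Mset in Hz. rewrite Hz, Rplus_0_l in HA. unfold piF, vfun in Hp. lra.
Qed.

Lemma ball3 (x y : R3) e : ball x e y <-> (ball (c1 x) e (c1 y) /\ ball (c2 x) e (c2 y)) /\ ball (c3 x) e (c3 y).
Proof. reflexivity. Qed.
Lemma ballR (x e y : R) : ball x e y <-> Rabs (y - x) < e.
Proof. reflexivity. Qed.

Theorem mainTheorem2 :
  exists (A M : R3 -> Prop) (pi : R3 -> R),
    lin_subspace M /\ lin_functional M pi /\ admissible A M pi /\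
    exists x0 : R3,
      forall s : R3 -> R3,
        (forall x, Eopt A M pi x (s x)) -> ~ continuous s x0.
Proof.
  exists Aset, Mset, piF. split; [|split; [|split]].
  - split; [|split].
    + exact c3_zero.
    + intros x y Hx Hy. unfold Mset in *. rewrite c3_plus, Hx, Hy. ring.
    + intros a x Hx. unfold Mset in *. rewrite c3_scal, Hx. ring.
  - split.
    + intros x y _ _. unfold piF. rewrite c1_plus, c2_plus. ring.
    + intros a x _. unfold piF. rewrite c1_scal, c2_scal. ring.
  - split; [|split].
    + split; [exact A_closed|split; [exact A_convex|split; [exact A_zero|exact A_mono]]].
    + intros z Hz [n1 [n2 n3]] Hne. unfold piF, Mset in *.
      destruct (Rle_dec (c1 z + c2 z) 0) as [Hle|]; [|lra].
      exfalso. apply Hne. destruct z as [[a b] c]. unfold c1, c2, c3 in *; simpl in *.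
      assert (a = 0) by lra. assert (b = 0) by lra. subst. reflexivity.
    + split.
      * intros x. rewrite rho_eq. reflexivity.
      * intros x. apply (continuous_ext vfun). intros y; rewrite rho_eq; reflexivity.
        apply cont_vfun.
  - exists zero. intros s Hs Hc.
    assert (Hc' : forall eps : posreal, locally (zero : R3) (fun y : R3 => ball (s zero) eps (s y))).
    { apply filterlim_locally. exact Hc. }
    destruct (Hc' (mkposreal (1/2) ltac:(lra))) as [d Hd]. simpl in Hd.
    pose proof (cond_pos d) as Hdpos.
    set (xp := ((0,0), d/2) : R3). set (xm := ((0,0), -(d/2)) : R3).
    assert (Bp : ball (zero : R3) d xp).
    { apply ball3. split; [split|]; apply ballR; unfold c1, c2, c3, xp; simpl;
      rewrite ?Rminus_0_r, ?Rabs_R0; try (rewrite Rabs_right by lra); lra. }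
    assert (Bm : ball (zero : R3) d xm).
    { apply ball3. split; [split|]; apply ballR; unfold c1, c2, c3, xm; simpl;
      rewrite ?Rminus_0_r, ?Rabs_R0; try (rewrite Rabs_left by lra); lra. }
    apply Hd in Bp. apply Hd in Bm.
    apply ball3 in Bp. apply ball3 in Bm.
    destruct Bp as [[P1 P2] _]. destruct Bm as [[M1 M2] _].
    apply ballR in P1, P2, M1, M2.
    apply Rabs_def2 in P1. apply Rabs_def2 in P2. apply Rabs_def2 in M1. apply Rabs_def2 in M2.
    pose proof (forced _ _ (Hs xp)) as Fp. pose proof (forced _ _ (Hs xm)) as Fm.
    apply L_forced_pos in Fp; [|unfold xp, c3; simpl; lra].
    apply L_forced_neg in Fm; [|unfold xm, c3; simpl; lra].
    assert (c1 xp = 0) by reflexivity. assert (c2 xp = 0) by reflexivity.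
    assert (c1 xm = 0) by reflexivity. assert (c2 xm = 0) by reflexivity.
    unfold c1, c2 in *. unfold minus, plus, opp in P1, P2, M1, M2. simpl in P1, P2, M1, M2. lra.
Qed.
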